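(* Let $\mathbf{C}$ and $\mathbf{D}$ be categories, and let $T\colon \mathbf{C}\to\mathbf{C}$ be a varietor that preserves reflexive coequalizers. Then for every monadic functor $G\colon \mathbf{C}\to\mathbf{D}$, the composite $\mathbf{Alg}(T)\xrightarrow{U}\mathbf{C}\xrightarrow{G}\mathbf{D}$ is monadic, where $U$ is the forgetful functor.
   Context: For an endofunctor $T\colon\mathbf{C}\to\mathbf{C}$, the category $\mathbf{Alg}(T)$ has as objects pairs $(X, a\colon TX\to X)$ and as morphisms $(X,a)\to(Y,b)$ the morphisms $h\colon X\to Y$ of $\mathbf{C}$ with $h\circ a = b\circ Th$; the forgetful functor $U\colon \mathbf{Alg}(T)\to\mathbf{C}$ sends $(X,a)$ to $X$ and $h$ to $h$. $T$ is called a varietor if $U$ has a left adjoint. A reflexive coequalizer is a coequalizer of a parallel pair $f,g\colon X\to Y$ having a common section $s\colon Y\to X$ (i.e. $f\circ s=g\circ s=1_Y$); $T$ preserves reflexive coequalizers if it sends such coequalizers to coequalizers. *)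

(* Defs.v *)
From Stdlib Require Import ProofIrrelevance.

Set Implicit Arguments.

Record Category := {
  Obj :> Type;
  Hom : Obj -> Obj -> Type;
  id : forall X, Hom X X;
  comp : forall X Y Z, Hom Y Z -> Hom X Y -> Hom X Z;
  comp_id_l : forall X Y (f : Hom X Y), comp (id Y) f = f;
  comp_id_r : forall X Y (f : Hom X Y), comp f (id X) = f;
  comp_assoc : forall X Y Z W (h : Hom Z W) (g : Hom Y Z) (f : Hom X Y),
      comp h (comp g f) = comp (comp h g) f
}.
Arguments Hom {c} X Y.
Arguments id {c} X.
Arguments comp {c X Y Z} g f.

Record Functor (C D : Category) := {
  fobj :> C -> D;
  fmap : forall X Y : C, Hom X Y -> Hom (fobj X) (fobj Y);
  fmap_id : forall X : C, fmap X X (id X) = id (fobj X);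
  fmap_comp : forall (X Y Z : C) (g : Hom Y Z) (f : Hom X Y),
      fmap X Z (comp g f) = comp (fmap Y Z g) (fmap X Y f)
}.
Arguments fmap {C D} f {X Y} h : rename.

Definition IdF (C : Category) : Functor C C.
Proof.
  refine {| fobj := fun X => X; fmap := fun X Y f => f |}; reflexivity.
Defined.

Definition FComp (A B C : Category) (G : Functor B C) (F : Functor A B)
  : Functor A C.
Proof.
  refine {| fobj := fun X => G (F X); fmap := fun X Y f => fmap G (fmap F f) |}.
  - intros X. rewrite !fmap_id. reflexivity.
  - intros X Y Z g f. rewrite !fmap_comp. reflexivity.
Defined.

Record NatIso (C D : Category) (F G : Functor C D) := {
  ni_fwd : forall X, Hom (F X) (G X);
  ni_bwd : forall X, Hom (G X) (F X);
  ni_nat : forall X Y (f : Hom X Y),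
      comp (ni_fwd Y) (fmap F f) = comp (fmap G f) (ni_fwd X);
  ni_fb : forall X, comp (ni_fwd X) (ni_bwd X) = id (G X);
  ni_bf : forall X, comp (ni_bwd X) (ni_fwd X) = id (F X)
}.

Record Equivalence (C D : Category) (K : Functor C D) := {
  eq_inv : Functor D C;
  eq_iso1 : NatIso (FComp eq_inv K) (IdF C);
  eq_iso2 : NatIso (FComp K eq_inv) (IdF D)
}.

Record Adjunction (C D : Category) (F : Functor D C) (G : Functor C D) := {
  adj_unit : forall d : D, Hom d (G (F d));
  adj_counit : forall c : C, Hom (F (G c)) c;
  adj_unit_nat : forall d d' (f : Hom d d'),
      comp (adj_unit d') f = comp (fmap G (fmap F f)) (adj_unit d);
  adj_counit_nat : forall c c' (f : Hom c c'),
      comp (adj_counit c') (fmap F (fmap G f)) = comp f (adj_counit c);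
  adj_tri1 : forall d, comp (adj_counit (F d)) (fmap F (adj_unit d)) = id (F d);
  adj_tri2 : forall c, comp (fmap G (adj_counit c)) (adj_unit (G c)) = id (G c)
}.

Lemma sig_eq_proj (A : Type) (P : A -> Prop) (x y : {a : A | P a}) :
  proj1_sig x = proj1_sig y -> x = y.
Proof.
  destruct x as [a p], y as [b q]; simpl; intros ->.
  f_equal; apply proof_irrelevance.
Qed.

Section AlgCat.
Variable C : Category.
Variable T : Functor C C.

Definition AlgObj := { X : C & Hom (T X) X }.
Definition AlgHom (A B : AlgObj) :=
  { h : Hom (projT1 A) (projT1 B) | comp h (projT2 A) = comp (projT2 B) (fmap T h) }.

Definition alg_id (A : AlgObj) : AlgHom A A.
Proof.
  exists (id _). rewrite fmap_id, comp_id_l, comp_id_r. reflexivity.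
Defined.

Definition alg_comp (A B D : AlgObj) (g : AlgHom B D) (f : AlgHom A B) : AlgHom A D.
Proof.
  exists (comp (proj1_sig g) (proj1_sig f)).
  destruct g as [g pg], f as [f pf]; simpl.
  rewrite <- comp_assoc, pf, comp_assoc, pg, <- comp_assoc, <- fmap_comp.
  reflexivity.
Defined.

Definition Alg : Category.
Proof.
  refine {| Obj := AlgObj; Hom := AlgHom; id := alg_id; comp := alg_comp |}.
  - intros; apply sig_eq_proj; simpl; apply comp_id_l.
  - intros; apply sig_eq_proj; simpl; apply comp_id_r.
  - intros; apply sig_eq_proj; simpl; apply comp_assoc.
Defined.

Definition AlgForget : Functor Alg C.
Proof.
  refine {| fobj := fun A : Alg => projT1 A; fmap := fun A B h => proj1_sig h |};
  reflexivity.
Defined.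
End AlgCat.

Definition FullSub (C : Category) (P : C -> Prop) : Category.
Proof.
  refine {| Obj := {x : C | P x};
            Hom := fun x y => Hom (proj1_sig x) (proj1_sig y);
            id := fun x => id (proj1_sig x);
            comp := fun x y z g f => comp g f |}.
  - intros; apply comp_id_l.
  - intros; apply comp_id_r.
  - intros; apply comp_assoc.
Defined.

(* Eilenberg--Moore category of the monad G F induced by an adjunction F -| G:
   the algebras (X, a : G F X -> X) with a o eta_X = 1 and
   a o mu_X = a o (G F a), where mu_X = G (eps_{F X}). *)
Section EM.
Variables (C D : Category) (F : Functor D C) (G : Functor C D).
Variable adj : Adjunction F G.

Definition EM_law (A : Alg (FComp G F)) : Prop :=
  comp (projT2 A) (adj_unit adj (projT1 A)) = id (projT1 A) /\
  comp (projT2 A) (fmap G (adj_counit adj (F (projT1 A))))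
    = comp (projT2 A) (fmap G (fmap F (projT2 A))).

Definition EM : Category := @FullSub (Alg (FComp G F)) EM_law.

Definition comparison_obj (c : C) : EM.
Proof.
  exists (existT (fun X => Hom (G (F X)) X) (G c) (fmap G (adj_counit adj c))).
  split; simpl.
  - apply adj_tri2.
  - rewrite <- !fmap_comp. f_equal. symmetry. apply adj_counit_nat.
Defined.

Definition Comparison : Functor C EM.
Proof.
  refine {| fobj := comparison_obj;
            fmap := fun c c' f =>
              exist _ (fmap G f) _ : Hom (comparison_obj c) (comparison_obj c') |}.
  - intros X; apply sig_eq_proj; simpl; apply fmap_id.
  - intros; apply sig_eq_proj; simpl; apply fmap_comp.
  Unshelve.
  simpl. rewrite <- !fmap_comp. f_equal. symmetry. apply adj_counit_nat.
Defined.
End EM.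

Definition Monadic (C D : Category) (G : Functor C D) : Prop :=
  exists (F : Functor D C) (adj : Adjunction F G), inhabited (Equivalence (Comparison adj)).

Definition Varietor (C : Category) (T : Functor C C) : Prop :=
  exists F : Functor C (Alg T), inhabited (Adjunction F (AlgForget T)).

Definition IsCoequalizer (C : Category) (X Y Q : C) (f g : Hom X Y) (q : Hom Y Q) : Prop :=
  comp q f = comp q g /\
  forall (Z : C) (h : Hom Y Z), comp h f = comp h g ->
    exists! k : Hom Q Z, comp k q = h.

Definition PreservesReflexiveCoequalizers (C D : Category) (T : Functor C D) : Prop :=
  forall (X Y Q : C) (f g : Hom X Y) (s : Hom Y X) (q : Hom Y Q),
    comp f s = id Y -> comp g s = id Y ->
    @IsCoequalizer C X Y Q f g q ->
    @IsCoequalizer D (T X) (T Y) (T Q) (fmap T f) (fmap T g) (fmap T q).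

(* Main.v *)
Require Import Defs.
From Stdlib Require Import ClassicalEpsilon ProofIrrelevance.

Lemma ff_ess_equiv (A B : Category) (K : Functor A B) :
  (forall X Y (f g : Hom X Y), fmap K f = fmap K g -> f = g) ->
  (forall X Y (m : Hom (K X) (K Y)), exists f, fmap K f = m) ->
  (forall b : B, exists (a : A) (i : Hom (K a) b) (j : Hom b (K a)),
       comp i j = id b /\ comp j i = id (K a)) ->
  inhabited (Equivalence K).
Proof.
  intros faith full ess.
  assert (pre : forall X Y (m : Hom (K X) (K Y)), {f : Hom X Y | fmap K f = m}).
  { intros X Y m. apply constructive_indefinite_description. apply full. }
  assert (ch : forall b : B, {a : A & {i : Hom (K a) b & {j : Hom b (K a) |
       comp i j = id b /\ comp j i = id (K a)}}}).
  { intros b. destruct (constructive_indefinite_description _ (ess b)) as [a Ha].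
    destruct (constructive_indefinite_description _ Ha) as [i Hi].
    destruct (constructive_indefinite_description _ Hi) as [j Hj].
    exists a, i, j. exact Hj. }
  pose (ob := fun b => projT1 (ch b)).
  pose (ii := fun b => projT1 (projT2 (ch b)) : Hom (K (ob b)) b).
  pose (jj := fun b => proj1_sig (projT2 (projT2 (ch b))) : Hom b (K (ob b))).
  assert (ij : forall b, comp (ii b) (jj b) = id b)
    by (intro b; exact (proj1 (proj2_sig (projT2 (projT2 (ch b)))))).
  assert (ji : forall b, comp (jj b) (ii b) = id _)
    by (intro b; exact (proj2 (proj2_sig (projT2 (projT2 (ch b)))))).
  clearbody ob ii jj.
  pose (pf := fun X Y m => proj1_sig (pre X Y m)).
  assert (pfs : forall X Y m, fmap K (pf X Y m) = m) by (intros; exact (proj2_sig (pre X Y m))).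
  clearbody pf. clear pre.
  unshelve refine (let L : Functor B A :=
    {| fobj := ob; fmap := fun b b' m => pf _ _ (comp (jj b') (comp m (ii b))) |} in _).
  - intros b. apply faith. rewrite pfs, fmap_id, comp_id_l. apply ji.
  - intros X Y Z g f. apply faith. rewrite fmap_comp, !pfs.
    rewrite <- !comp_assoc. f_equal. f_equal. rewrite !comp_assoc.
    rewrite ij, comp_id_l. reflexivity.
  - constructor. refine {| eq_inv := L |}.
    + unshelve refine {| ni_fwd := fun X : A => pf (ob (K X)) X (ii (K X)) : Hom (FComp L K X) (IdF A X);
                         ni_bwd := fun X : A => pf X (ob (K X)) (jj (K X)) : Hom (IdF A X) (FComp L K X) |}.
      * intros X Y f. apply faith. simpl. rewrite !fmap_comp, !pfs.
        rewrite !comp_assoc, ij, comp_id_l. reflexivity.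
      * intros X. apply faith. simpl. rewrite fmap_comp, !pfs, ij, fmap_id. reflexivity.
      * intros X. apply faith. simpl. rewrite fmap_comp, !pfs, ji, fmap_id. reflexivity.
    + unshelve refine {| ni_fwd := fun b : B => ii b : Hom (FComp K L b) (IdF B b); ni_bwd := fun b : B => jj b : Hom (IdF B b) (FComp K L b) |}.
      * intros X Y f. simpl. rewrite pfs. rewrite !comp_assoc, ij, comp_id_l. reflexivity.
      * intros. apply ij.
      * intros. apply ji.
Qed.
Lemma cancel_l {C : Category} {X Y Z : C} (v : Hom Y X) (u : Hom X Y) (a b : Hom Z X) :
  comp v u = id X -> comp u a = comp u b -> a = b.
Proof.
  intros H E. rewrite <- (comp_id_l _ _ _ a), <- (comp_id_l _ _ _ b), <- H,
    <- !comp_assoc, E. reflexivity.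
Qed.

Lemma cancel_r {C : Category} {X Y Z : C} (v : Hom Y X) (u : Hom X Y) (a b : Hom Y Z) :
  comp u v = id Y -> comp a u = comp b u -> a = b.
Proof.
  intros H E. rewrite <- (comp_id_r _ _ _ a), <- (comp_id_r _ _ _ b), <- H,
    !comp_assoc, E. reflexivity.
Qed.

Lemma natiso_faithful (A B : Category) (K : Functor A B) (L : Functor B A)
  (n : NatIso (FComp L K) (IdF A)) :
  forall X Y (f g : Hom X Y), fmap K f = fmap K g -> f = g.
Proof.
  intros X Y f g H.
  assert (E : forall h : Hom X Y, h = comp (ni_fwd n Y) (comp (fmap L (fmap K h)) (ni_bwd n X))).
  { intros h. simpl. rewrite comp_assoc.
    pose proof (ni_nat n X Y h) as N. simpl in N. rewrite N.
    rewrite <- comp_assoc. pose proof (ni_fb n X) as F. simpl in F. rewrite F.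
    rewrite comp_id_r. reflexivity. }
  rewrite (E f), (E g), H. reflexivity.
Qed.

Lemma equiv_faithful {A B : Category} {K : Functor A B} (e : Equivalence K) :
  forall X Y (f g : Hom X Y), fmap K f = fmap K g -> f = g.
Proof. exact (@natiso_faithful A B K _ (eq_iso1 e)). Qed.

Lemma equiv_full {A B : Category} {K : Functor A B} (e : Equivalence K) :
  forall X Y (m : Hom (K X) (K Y)), exists f, fmap K f = m.
Proof.
  intros X Y m.
  pose (n := eq_iso1 e).
  exists (comp (ni_fwd n Y) (comp (fmap (eq_inv e) m) (ni_bwd n X))).
  apply (@natiso_faithful B A (eq_inv e) K (eq_iso2 e)).
  assert (Hc : comp (ni_fwd n Y) (fmap (eq_inv e) (fmap K (comp (ni_fwd n Y) (comp (fmap (eq_inv e) m) (ni_bwd n X)))))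
             = comp (ni_fwd n Y) (fmap (eq_inv e) m)).
  { simpl. pose proof (ni_nat n _ _ (comp (ni_fwd n Y) (comp (fmap (eq_inv e) m) (ni_bwd n X)))) as N. simpl in N.
    rewrite N. rewrite <- !comp_assoc. pose proof (ni_bf n X) as F. simpl in F. rewrite F, comp_id_r.
    reflexivity. }
  simpl. apply (cancel_l (ni_bwd n Y) (ni_fwd n Y)).
  - pose proof (ni_bf n Y) as F. simpl in F. exact F.
  - exact Hc.
Qed.
Lemma arw {C : Category} {X Y Y' Z W : C} {a : Hom Y Z} {b : Hom X Y} {c : Hom Y' Z}
  {d : Hom X Y'} (H : comp a b = comp c d) (r : Hom W X) :
  comp a (comp b r) = comp c (comp d r).
Proof. rewrite !comp_assoc, H. reflexivity. Qed.

Lemma arw1 {C : Category} {X Y W : C} {a : Hom Y X} {b : Hom X Y}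
  (H : comp a b = id X) (r : Hom W X) : comp a (comp b r) = r.
Proof. rewrite comp_assoc, H, comp_id_l. reflexivity. Qed.

Lemma feq {C D : Category} (K : Functor C D) {X Y Y' Z : C} {a : Hom Y Z} {b : Hom X Y} {c : Hom Y' Z}
  {d : Hom X Y'} (H : comp a b = comp c d) :
  comp (fmap K a) (fmap K b) = comp (fmap K c) (fmap K d).
Proof. rewrite <- !fmap_comp, H. reflexivity. Qed.

Lemma feq1 {C D : Category} (K : Functor C D) {X Y : C} {a : Hom Y X} {b : Hom X Y}
  (H : comp a b = id X) : comp (fmap K a) (fmap K b) = id (K X).
Proof. rewrite <- fmap_comp, H, fmap_id. reflexivity. Qed.

Ltac norm := repeat (rewrite ?fmap_comp, ?fmap_id, ?comp_id_l, ?comp_id_r, <- ?comp_assoc; simpl).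

Definition adj_comp {C D E : Category} {F1 : Functor D C} {G1 : Functor C D}
  (a1 : Adjunction F1 G1) {F2 : Functor C E} {G2 : Functor E C} (a2 : Adjunction F2 G2)
  : Adjunction (FComp F2 F1) (FComp G1 G2).
Proof.
  unshelve refine {| adj_unit := fun d : D => comp (fmap G1 (adj_unit a2 (F1 d))) (adj_unit a1 d) : Hom d (FComp G1 G2 (FComp F2 F1 d));
             adj_counit := fun e : E => comp (adj_counit a2 e) (fmap F2 (adj_counit a1 (G2 e))) : Hom (FComp F2 F1 (FComp G1 G2 e)) e |}.
  - intros d d' f. simpl. norm. rewrite (adj_unit_nat a1). norm.
    rewrite (arw (feq G1 (adj_unit_nat a2 _ _ (fmap F1 f)))). reflexivity.
  - intros c c' f. simpl. norm.
    rewrite (feq F2 (adj_counit_nat a1 _ _ (fmap G2 f))).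
    rewrite (arw (adj_counit_nat a2 _ _ f)). reflexivity.
  - intros d. simpl. norm.
    rewrite (arw (feq F2 (adj_counit_nat a1 _ _ (adj_unit a2 (F1 d))))).
    rewrite (arw1 (adj_tri1 a2 (F1 d))). apply (feq1 F2 (adj_tri1 a1 d)).
  - intros e. simpl. norm.
    rewrite <- (arw (feq G1 (adj_unit_nat a2 _ _ (adj_counit a1 (G2 e))))).
    rewrite (arw1 (feq1 G1 (adj_tri2 a2 e))). apply (adj_tri2 a1 (G2 e)).
Defined.

Lemma adj_hom_uniq {C D : Category} {F : Functor D C} {G : Functor C D} (adj : Adjunction F G)
  (d : D) (B : C) (g1 g2 : Hom (F d) B) :
  comp (fmap G g1) (adj_unit adj d) = comp (fmap G g2) (adj_unit adj d) -> g1 = g2.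
Proof.
  intros H.
  assert (E : forall g : Hom (F d) B, g = comp (adj_counit adj B) (fmap F (comp (fmap G g) (adj_unit adj d)))).
  { intros g. rewrite fmap_comp, comp_assoc, (adj_counit_nat adj), <- comp_assoc,
      (adj_tri1 adj), comp_id_r. reflexivity. }
  rewrite (E g1), (E g2), H. reflexivity.
Qed.

Lemma mon_faith {C D : Category} {F : Functor D C} {G : Functor C D} (adj : Adjunction F G)
  (e : Equivalence (Comparison adj)) :
  forall X Y (f g : Hom X Y), fmap G f = fmap G g -> f = g.
Proof.
  intros X Y f g H. apply (equiv_faithful e). apply sig_eq_proj. simpl. exact H.
Qed.

Lemma mon_full {C D : Category} {F : Functor D C} {G : Functor C D} (adj : Adjunction F G)
  (e : Equivalence (Comparison adj)) :
  forall c c' (m : Hom (G c) (G c')),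
  comp m (fmap G (adj_counit adj c)) = comp (fmap G (adj_counit adj c')) (fmap G (fmap F m)) ->
  exists f, fmap G f = m.
Proof.
  intros c c' m Hm.
  destruct (equiv_full e c c' (exist _ m Hm)) as [f Hf].
  exists f. apply (f_equal (@proj1_sig _ _)) in Hf. simpl in Hf. exact Hf.
Qed.

Lemma mon_ess {C D : Category} {F : Functor D C} {G : Functor C D} (adj : Adjunction F G)
  (e : Equivalence (Comparison adj)) :
  forall (X : D) (a : Hom (G (F X)) X),
  comp a (adj_unit adj X) = id X ->
  comp a (fmap G (adj_counit adj (F X))) = comp a (fmap G (fmap F a)) ->
  exists (c : C) (phi : Hom (G c) X) (psi : Hom X (G c)),
    comp phi psi = id X /\ comp psi phi = id (G c) /\
    comp phi (fmap G (adj_counit adj c)) = comp a (fmap G (fmap F phi)).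
Proof.
  intros X a H1 H2.
  pose (A := exist (EM_law adj) (existT (fun X => Hom (G (F X)) X) X a) (conj H1 H2) : EM adj).
  exists (eq_inv e A).
  exists (proj1_sig (ni_fwd (eq_iso2 e) A)), (proj1_sig (ni_bwd (eq_iso2 e) A)).
  split; [|split].
  - pose proof (f_equal (@proj1_sig _ _) (ni_fb (eq_iso2 e) A)) as E. simpl in E. exact E.
  - pose proof (f_equal (@proj1_sig _ _) (ni_bf (eq_iso2 e) A)) as E. simpl in E. exact E.
  - pose proof (proj2_sig (ni_fwd (eq_iso2 e) A)) as E. simpl in E. exact E.
Qed.

Lemma mon_coeq {C D : Category} {F : Functor D C} {G : Functor C D} (adj : Adjunction F G)
  (e : Equivalence (Comparison adj)) (c : C) :
  @IsCoequalizer C _ _ _ (adj_counit adj (F (G c))) (fmap F (fmap G (adj_counit adj c))) (adj_counit adj c).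
Proof.
  split.
  - symmetry. apply (adj_counit_nat adj).
  - intros Z h Hh.
    assert (Hm : comp (comp (fmap G h) (adj_unit adj (G c))) (fmap G (adj_counit adj c))
       = comp (fmap G (adj_counit adj Z)) (fmap G (fmap F (comp (fmap G h) (adj_unit adj (G c)))))).
    { norm. rewrite (arw (feq G (adj_counit_nat adj _ _ h))).
      rewrite (feq1 G (adj_tri1 adj (G c))), comp_id_r.
      rewrite (adj_unit_nat adj). norm.
      rewrite <- (arw (feq G Hh)). rewrite (adj_tri2 adj (F (G c))), comp_id_r. reflexivity. }
    destruct (mon_full adj e _ _ _ Hm) as [k Hk].
    exists k. split.
    + apply (mon_faith adj e). rewrite fmap_comp, Hk, <- comp_assoc.
      rewrite (adj_unit_nat adj). norm.
      rewrite <- (arw (feq G Hh)). rewrite (adj_tri2 adj (F (G c))), comp_id_r. reflexivity.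
    + intros k' Hk'. apply (mon_faith adj e). rewrite Hk, <- Hk', fmap_comp, <- comp_assoc,
        (adj_tri2 adj c), comp_id_r. reflexivity.
Qed.

Lemma arw' {C : Category} {X Y Z W : C} {a : Hom Y Z} {b : Hom X Y} {c : Hom X Z}
  (H : comp a b = c) (r : Hom W X) : comp a (comp b r) = comp c r.
Proof. rewrite comp_assoc, H. reflexivity. Qed.

Lemma feq' {C D : Category} (K : Functor C D) {X Y Z : C} {a : Hom Y Z} {b : Hom X Y} {c : Hom X Z}
  (H : comp a b = c) : comp (fmap K a) (fmap K b) = fmap K c.
Proof. rewrite <- fmap_comp, H. reflexivity. Qed.

Lemma coeq_epi {C : Category} {X Y Q : C} {f g : Hom X Y} {q : Hom Y Q} :
  @IsCoequalizer C X Y Q f g q -> forall Z (h1 h2 : Hom Q Z), comp h1 q = comp h2 q -> h1 = h2.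
Proof.
  intros [Hq Hu] Z h1 h2 H.
  destruct (Hu Z (comp h1 q)) as [k [_ Hk]].
  { rewrite <- !comp_assoc, Hq. reflexivity. }
  rewrite <- (Hk h1 eq_refl), <- (Hk h2 (eq_sym H)). reflexivity.
Qed.

Lemma teps (C D : Category) (T : Functor C C) (G : Functor C D) (F : Functor D C)
  (adj : Adjunction F G) (e : Equivalence (Comparison adj)) (pres : PreservesReflexiveCoequalizers T) (c : C) :
  @IsCoequalizer C _ _ _ (fmap T (adj_counit adj (F (G c)))) (fmap T (fmap F (fmap G (adj_counit adj c))))
    (fmap T (adj_counit adj c)).
Proof.
  apply (pres _ _ _ _ _ (fmap F (adj_unit adj (G c)))).
  - apply (adj_tri1 adj).
  - apply (feq1 F (adj_tri2 adj c)).
  - apply (mon_coeq adj e).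
Qed.

Lemma compE {C D E : Category} {F1 : Functor D C} {G1 : Functor C D}
  (a1 : Adjunction F1 G1) {F2 : Functor C E} {G2 : Functor E C} (a2 : Adjunction F2 G2) (x : E) :
  comp (fmap G2 (adj_counit (adj_comp a1 a2) x)) (adj_unit a2 (F1 (G1 (G2 x)))) = adj_counit a1 (G2 x).
Proof.
  simpl. norm. rewrite <- (adj_unit_nat a2). rewrite (arw1 (adj_tri2 a2 x)). reflexivity.
Qed.

Lemma halg_generic {C : Category} (T : Functor C C) {a0 b0 : C} (a : Hom (T a0) a0) (b : Hom (T b0) b0)
  {X Y : C} (sX : Hom (T X) X) (sY : Hom (T Y) Y) (eA : Hom X a0) (eB : Hom Y b0) (g : Hom X Y)
  (f0 : Hom a0 b0) {W : C} (etA : Hom W X) :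
  comp eA sX = comp a (fmap T eA) -> comp eB sY = comp b (fmap T eB) ->
  comp g sX = comp sY (fmap T g) -> comp f0 eA = comp eB g ->
  (forall Z (h1 h2 : Hom (T a0) Z), comp h1 (fmap T (comp eA etA)) = comp h2 (fmap T (comp eA etA)) -> h1 = h2) ->
  comp f0 a = comp b (fmap T f0).
Proof.
  intros HeA HeB Hg Hf epi. apply epi. rewrite !fmap_comp. rewrite <- !comp_assoc.
  rewrite <- (arw HeA), (arw Hf), (arw Hg), (arw (feq T Hf)), <- (arw HeB). reflexivity.
Qed.

Lemma full_part (C D : Category) (T : Functor C C) (G : Functor C D) (F : Functor D C)
  (adj : Adjunction F G) (e : Equivalence (Comparison adj)) (pres : PreservesReflexiveCoequalizers T)
  (P : Functor C (Alg T)) (ap : Adjunction P (AlgForget T)) :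
  forall (A B : Alg T) (m : Hom (Comparison (adj_comp adj ap) A) (Comparison (adj_comp adj ap) B)),
  exists f, fmap (Comparison (adj_comp adj ap)) f = m.
Proof.
  intros A B [m Hm]. simpl in Hm. simpl in m.
  assert (EA : forall X : Alg T, fmap G (adj_counit adj (projT1 X)) =
     comp (fmap G (proj1_sig (adj_counit (adj_comp adj ap) X))) (fmap G (adj_unit ap (F (G (projT1 X)))))).
  { intros X. rewrite <- fmap_comp. f_equal. symmetry. apply (compE adj ap X). }
  assert (Hm1 : comp m (fmap G (adj_counit adj (projT1 A))) =
                comp (fmap G (adj_counit adj (projT1 B))) (fmap G (fmap F m))).
  { rewrite !EA. simpl. rewrite comp_assoc, Hm. norm.
    pose proof (feq G (adj_unit_nat ap _ _ (fmap F m))) as N. simpl in N. rewrite N. reflexivity. }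
  destruct (mon_full adj e _ _ m Hm1) as [f0 Hf0]. subst m.
  assert (Hm2 : comp f0 (proj1_sig (adj_counit (adj_comp adj ap) A)) =
     comp (proj1_sig (adj_counit (adj_comp adj ap) B)) (proj1_sig (fmap P (fmap F (fmap G f0))))).
  { apply (mon_faith adj e). simpl. rewrite fmap_comp. symmetry. rewrite fmap_comp. symmetry. exact Hm. }
  assert (CE : forall X : Alg T, comp (proj1_sig (adj_counit (adj_comp adj ap) X)) (adj_unit ap (F (G (projT1 X))))
      = adj_counit adj (projT1 X)) by (intros X; apply (compE adj ap X)).
  assert (Halg : comp f0 (projT2 A) = comp (projT2 B) (fmap T f0)).
  { refine (halg_generic T (projT2 A) (projT2 B) _ _ _ _ _ f0 (adj_unit ap (F (G (projT1 A))))
       (proj2_sig (adj_counit (adj_comp adj ap) A)) (proj2_sig (adj_counit (adj_comp adj ap) B))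
       (proj2_sig (fmap P (fmap F (fmap G f0)))) Hm2 _).
    intros Z h1 h2 H. apply (coeq_epi (teps _ _ T _ _ adj e pres (projT1 A))).
    rewrite <- (CE A). exact H. }
  exists (exist _ f0 Halg). apply sig_eq_proj. reflexivity.
Qed.

Lemma feqPU {C : Category} {T : Functor C C} (P : Functor C (Alg T)) {X Y Y' Z : C}
  {a : Hom Y Z} {b : Hom X Y} {c : Hom Y' Z} {d : Hom X Y'} (H : comp a b = comp c d) :
  comp (proj1_sig (fmap P a)) (proj1_sig (fmap P b)) = comp (proj1_sig (fmap P c)) (proj1_sig (fmap P d)).
Proof.
  pose proof (f_equal (@proj1_sig _ _) (feq P H)) as E. simpl in E. exact E.
Qed.

Lemma feq1PU {C : Category} {T : Functor C C} (P : Functor C (Alg T)) {X Y : C}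
  {a : Hom Y X} {b : Hom X Y} (H : comp a b = id X) :
  comp (proj1_sig (fmap P a)) (proj1_sig (fmap P b)) = id (projT1 (P X)).
Proof.
  pose proof (f_equal (@proj1_sig _ _) (feq1 P H)) as E. simpl in E. exact E.
Qed.

Lemma ess_core (C D : Category) (T : Functor C C) (G : Functor C D) (F : Functor D C) (P : Functor C (Alg T))
 (eta : forall d : D, Hom d (G (F d))) (eps : forall c : C, Hom (F (G c)) c)
 (etaP : forall c : C, Hom c (projT1 (P c)))
 (eps' : forall A : Alg T, Hom (P (F (G (projT1 A)))) A)
 (eps_nat : forall c c' (f : Hom c c'), comp (eps c') (fmap F (fmap G f)) = comp f (eps c))
 (etaP_nat : forall c c' (f : Hom c c'), comp (etaP c') f = comp (proj1_sig (fmap P f)) (etaP c))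
 (CE : forall A : Alg T, comp (proj1_sig (eps' A)) (etaP (F (G (projT1 A)))) = eps (projT1 A))
 (eps'_nat : forall (A B : Alg T) (h : Hom A B), comp (proj1_sig (eps' B)) (proj1_sig (fmap P (fmap F (fmap G (proj1_sig h))))) = comp (proj1_sig h) (proj1_sig (eps' A)))
 (freeU : forall c (A : Alg T) (g1 g2 : Hom (P c) A), comp (proj1_sig g1) (etaP c) = comp (proj1_sig g2) (etaP c) -> g1 = g2)
 (faith : forall c c' (f g : Hom c c'), fmap G f = fmap G g -> f = g)
 (full : forall c c' (m : Hom (G c) (G c')), comp m (fmap G (eps c)) = comp (fmap G (eps c')) (fmap G (fmap F m)) -> exists f, fmap G f = m)
 (ess : forall (X : D) (a : Hom (G (F X)) X), comp a (eta X) = id X ->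
     comp a (fmap G (eps (F X))) = comp a (fmap G (fmap F a)) ->
     exists (c : C) (phi : Hom (G c) X) (psi : Hom X (G c)),
     comp phi psi = id X /\ comp psi phi = id (G c) /\
     comp phi (fmap G (eps c)) = comp a (fmap G (fmap F phi)))
 (coeq : forall c, @IsCoequalizer C _ _ _ (fmap T (eps (F (G c)))) (fmap T (fmap F (fmap G (eps c)))) (fmap T (eps c)))
 (X : D) (x : Hom (G (projT1 (P (F X)))) X)
 (L1 : comp x (comp (fmap G (etaP (F X))) (eta X)) = id X)
 (L2 : comp x (fmap G (proj1_sig (eps' (P (F X))))) = comp x (fmap G (proj1_sig (fmap P (fmap F x))))) :
 exists (c : C) (t : Hom (T c) c) (phi : Hom (G c) X) (psi : Hom X (G c)),
   comp phi psi = id X /\ comp psi phi = id (G c) /\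
   comp phi (fmap G (proj1_sig (eps' (existT (fun Y => Hom (T Y) Y) c t)))) =
   comp x (fmap G (proj1_sig (fmap P (fmap F phi)))).
Proof.
  remember (comp x (fmap G (etaP (F X)))) as a0 eqn:Ha0.
  assert (HxGF : comp x (fmap G (eps (projT1 (P (F X))))) = comp a0 (fmap G (fmap F x))).
  { rewrite Ha0. rewrite <- comp_assoc, <- fmap_comp, etaP_nat, fmap_comp, comp_assoc, <- L2,
      <- comp_assoc, <- fmap_comp, CE. reflexivity. }
  assert (Ha0_1 : comp a0 (eta X) = id X) by (rewrite Ha0, <- comp_assoc; exact L1).
  assert (Ha0_2 : comp a0 (fmap G (eps (F X))) = comp a0 (fmap G (fmap F a0))).
  { symmetry. rewrite Ha0 at 2. norm. rewrite (arw' (eq_sym HxGF)).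
    rewrite <- comp_assoc, <- fmap_comp, eps_nat, fmap_comp, comp_assoc, <- Ha0. reflexivity. }
  destruct (ess X a0 Ha0_1 Ha0_2) as (c & phi & psi & Hpp & Hpp' & Hphi).
  assert (HGe : fmap G (eps c) = comp psi (comp a0 (fmap G (fmap F phi)))).
  { rewrite <- Hphi, comp_assoc, Hpp', comp_id_l. reflexivity. }
  remember (comp psi (comp x (fmap G (proj1_sig (fmap P (fmap F phi)))))) as x' eqn:Hx'.
  assert (Hx'alg : comp x' (fmap G (eps (projT1 (P (F (G c)))))) = comp (fmap G (eps c)) (fmap G (fmap F x'))).
  { rewrite HGe, Hx'. norm.
    rewrite (arw1 (feq1 G (feq1 F Hpp))). rewrite <- (arw HxGF).
    rewrite (feq G (eps_nat _ _ (proj1_sig (fmap P (fmap F phi))))). reflexivity. }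
  destruct (full _ _ x' Hx'alg) as [r Hr].
  assert (He'eta : comp (proj1_sig (eps' (P (F X)))) (proj1_sig (fmap P (fmap F (fmap G (etaP (F X))))))
                 = proj1_sig (fmap P (eps (F X)))).
  { assert (H : @comp (Alg T) _ _ _ (eps' (P (F X))) (fmap P (fmap F (fmap G (etaP (F X))))) = fmap P (eps (F X))).
    { apply freeU. simpl. rewrite <- comp_assoc, <- (etaP_nat _ _ (fmap F (fmap G (etaP (F X))))), comp_assoc, CE,
        eps_nat, <- (etaP_nat _ _ (eps (F X))). reflexivity. }
    apply (f_equal (@proj1_sig _ _)) in H. exact H. }
  assert (Hkey : comp x (fmap G (proj1_sig (fmap P (fmap F a0)))) = comp x (fmap G (proj1_sig (fmap P (eps (F X)))))).
  { rewrite Ha0. norm. rewrite <- (arw L2). rewrite (feq' G He'eta). reflexivity. }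
  assert (Hrdesc : comp r (proj1_sig (fmap P (eps (F (G c))))) = comp r (proj1_sig (fmap P (fmap F (fmap G (eps c)))))).
  { apply faith. rewrite !fmap_comp, Hr, Hx'. norm.
    rewrite (feq G (feqPU P (eq_sym (eps_nat _ _ (fmap F phi))))).
    rewrite (feq G (feqPU P (feq F Hphi))).
    rewrite (arw Hkey). reflexivity. }
  remember (comp r (comp (projT2 (P (F (G c)))) (fmap T (etaP (F (G c)))))) as rho eqn:Hrho.
  assert (Hrho' : comp rho (fmap T (eps (F (G c)))) = comp rho (fmap T (fmap F (fmap G (eps c))))).
  { rewrite Hrho. rewrite <- !comp_assoc.
    rewrite (feq T (etaP_nat _ _ (eps (F (G c))))), (feq T (etaP_nat _ _ (fmap F (fmap G (eps c))))).
    rewrite <- (arw (proj2_sig (fmap P (eps (F (G c)))))).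
    rewrite <- (arw (proj2_sig (fmap P (fmap F (fmap G (eps c)))))).
    rewrite (arw Hrdesc). reflexivity. }
  destruct (proj2 (coeq c) c rho Hrho') as [t [Ht _]].
  assert (Hrassoc : comp r (proj1_sig (fmap P (fmap F (fmap G r)))) = comp r (proj1_sig (eps' (P (F (G c)))))).
  { apply faith. rewrite !fmap_comp. rewrite Hr. rewrite Hx'. norm.
    rewrite (arw1 (feq1 G (feq1PU P (feq1 F Hpp)))).
    rewrite <- (arw L2).
    rewrite (feq G (eps'_nat _ _ (fmap P (fmap F phi)))). reflexivity. }
  assert (Hralg : comp r (projT2 (P (F (G c)))) = comp t (fmap T r)).
  { apply (coeq_epi (coeq (projT1 (P (F (G c)))))).
    transitivity (comp rho (fmap T (fmap F (fmap G r)))).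
    - rewrite Hrho. rewrite <- (CE (P (F (G c)))). norm.
      rewrite <- (arw (proj2_sig (eps' (P (F (G c)))))). rewrite <- (arw Hrassoc).
      rewrite (arw (proj2_sig (fmap P (fmap F (fmap G r))))).
      rewrite <- (feq T (etaP_nat _ _ (fmap F (fmap G r)))). reflexivity.
    - rewrite <- Ht. rewrite <- !comp_assoc. rewrite (feq T (eps_nat _ _ r)). reflexivity. }
  assert (Heps'A : proj1_sig (eps' (existT (fun Y => Hom (T Y) Y) c t)) = r).
  { assert (H : eps' (existT (fun Y => Hom (T Y) Y) c t) =
               (exist _ r Hralg : Hom (P (F (G c))) (existT (fun Y => Hom (T Y) Y) c t))).
    { apply freeU. simpl.
      etransitivity; [apply (CE (existT (fun Y => Hom (T Y) Y) c t))|]. simpl.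
      apply faith. rewrite fmap_comp, Hr, Hx'. norm.
      rewrite <- (feq G (etaP_nat _ _ (fmap F phi))).
      rewrite (arw' (eq_sym Ha0)). rewrite HGe. reflexivity. }
    rewrite H. reflexivity. }
  exists c, t, phi, psi. split; [exact Hpp | split; [exact Hpp' |]].
  rewrite Heps'A. simpl. rewrite Hr, Hx', comp_assoc, Hpp, comp_id_l. reflexivity.
Qed.

Theorem theorem1p10 (C D : Category) (T : Functor C C) (G : Functor C D) :
  Varietor T ->
  PreservesReflexiveCoequalizers T ->
  Monadic G ->
  Monadic (FComp G (AlgForget T)).
Proof.
  intros [P [ap]] pres [F [adj [e]]].
  exists (FComp P F), (adj_comp adj ap).
  apply ff_ess_equiv.
  - intros A B f g H. apply sig_eq_proj. apply (mon_faith adj e).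
    apply (f_equal (@proj1_sig _ _)) in H. simpl in H. exact H.
  - exact (full_part C D T G F adj e pres P ap).
  - intros [[X x] [L1 L2]].
    destruct (ess_core C D T G F P (adj_unit adj) (adj_counit adj) (adj_unit ap)
      (adj_counit (adj_comp adj ap))
      (adj_counit_nat adj) (adj_unit_nat ap) (compE adj ap)
      (fun A B h => f_equal (@proj1_sig _ _) (adj_counit_nat (adj_comp adj ap) A B h))
      (adj_hom_uniq ap) (mon_faith adj e) (mon_full adj e) (mon_ess adj e)
      (teps _ _ T _ _ adj e pres) X x L1 L2) as (c & t & phi & psi & H1 & H2 & H3).
    assert (Hpsi : comp psi x = comp (fmap G (proj1_sig (adj_counit (adj_comp adj ap) (existT (fun Y => Hom (T Y) Y) c t))))
                                     (fmap G (proj1_sig (fmap P (fmap F psi))))).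
    { symmetry. apply (cancel_l psi phi); [exact H2|].
      transitivity (comp (comp x (fmap G (proj1_sig (fmap P (fmap F phi))))) (fmap G (proj1_sig (fmap P (fmap F psi))))).
      - rewrite comp_assoc. apply (f_equal (fun z => comp z _)). exact H3.
      - simpl. rewrite <- comp_assoc, (feq1 G (feq1PU P (feq1 F H1))), comp_id_r, comp_assoc, H1, comp_id_l.
      reflexivity. }
    exists (existT (fun Y => Hom (T Y) Y) c t).
    unshelve eexists (exist _ phi _). { exact H3. }
    unshelve eexists (exist _ psi _). { exact Hpsi. }
    split; apply sig_eq_proj; simpl; assumption.
Qed.
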